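(* Let $G$ be an edge-ordered graph with average degree $d$, and suppose there is $0<\varepsilon<1$ such that every set of at most $\varepsilon d$ vertices of $G$ induces at most $(1/2-\varepsilon)d$ edges. Then $G$ has a monotone path of length $\varepsilon d$.
   Context: An edge-ordered graph is a graph together with a total order on its edge set. A path is monotone if its consecutive edges form a monotone sequence in this order; its length is the number of edges. *)

(* Defs.v *)
From HB Require Import structures.
From mathcomp Require Import all_boot all_order all_algebra.
Set Implicit Arguments. Unset Strict Implicit. Unset Printing Implicit Defensive.
Import Order.TTheory GRing.Theory Num.Theory.

Definition simple_graph (V : finType) (e : rel V) : Prop :=
  symmetric e /\ irreflexive e.

Definition edges (V : finType) (e : rel V) : {set {set V}} :=
  [set [set u; v] | u in V, v in V & e u v].

Definition induced_edges (V : finType) (e : rel V) (S : {set V}) : {set {set V}} :=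
  [set A in edges e | A \subset S].

(* A total order on the edge set, given by an injective rank function:
   lab u v is the rank of edge {u,v}; it is symmetric and distinct edges
   receive distinct ranks. *)
Definition edge_order (V : finType) (e : rel V) (lab : V -> V -> nat) : Prop :=
  (forall u v, lab u v = lab v u) /\
  (forall u v x y, e u v -> e x y -> lab u v = lab x y ->
     [set u; v] = [set x; y]).

Definition avg_degree (R : realFieldType) (V : finType) (e : rel V) : R :=
  (2 * #|edges e|)%:R / #|V|%:R.

(* A monotone path of length k: a sequence of k+1 distinct vertices,
   consecutive ones adjacent, whose consecutive edges have monotone
   (increasing or decreasing) ranks. *)
Definition monotone_path (V : finType) (e : rel V) (lab : V -> V -> nat)
    (p : seq V) : Prop :=
  match p with
  | [::] => False
  | x :: s => [/\ uniq p, path e x s &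
                 sorted ltn (pairmap lab x s) \/ sorted gtn (pairmap lab x s)]
  end.

Definition path_length (V : Type) (p : seq V) : nat := (size p).-1.

(* Main.v *)
Require Import Defs.
From HB Require Import structures.
From mathcomp Require Import all_boot all_order all_algebra.
From mathcomp Require Import zify ring lra.
From Stdlib Require Import Lia.
Import Order.TTheory GRing.Theory Num.Theory.
Section Walk.
Variables (V : finType) (e : rel V) (lab : V -> V -> nat).
Hypothesis esym : symmetric e.
Hypothesis eirr : irreflexive e.
Hypothesis labsym : forall u v, lab u v = lab v u.
Hypothesis labinj : forall u v x y, e u v -> e x y -> lab u v = lab x y ->
     [set u; v] = [set x; y].

Lemma mem_edges x y : e x y -> [set x; y] \in edges e.
Proof. by move=> exy; apply/imset2P; exists x y; rewrite ?inE. Qed.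

Lemma edgesP E : E \in edges e -> exists x y, E = [set x; y] /\ e x y.
Proof. by case/imset2P=> x y _; rewrite inE => /andP[_ exy] ->; exists x, y. Qed.

Lemma lab_set x y u v : e x y -> e u v -> [set x; y] = [set u; v] -> lab x y = lab u v.
Proof.
move=> exy euv eq.
have xu : (x == u) || (x == v) by rewrite -in_set2 -eq set21.
have yu : (y == u) || (y == v) by rewrite -in_set2 -eq set22.
have nxy : x != y by apply/eqP => exy'; move: exy; rewrite exy' eirr.
case/orP: xu => /eqP xu; case/orP: yu => /eqP yu.
- by move: nxy; rewrite xu yu eqxx.
- by rewrite xu yu.
- by rewrite xu yu labsym.
- by move: nxy; rewrite xu yu eqxx.
Qed.

Definition old t (E : {set V}) : bool :=
  [exists x, exists y, (E == [set x; y]) && e x y && (lab x y < t)].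
Definition Oproc t := [set E in edges e | old t E].

Lemma O_some t u v : e u v -> lab u v = t ->
  Oproc t.+1 = [set [set u; v]] :|: Oproc t /\ [set u; v] \notin Oproc t.
Proof.
move=> euv luv; split.
  apply/setP=> E; rewrite !inE; apply/idP/idP.
  - case/andP=> Ee /existsP[x /existsP[y /andP[/andP[/eqP EE exy] lt]]].
    rewrite ltnS leq_eqVlt in lt; case/orP: lt => [/eqP lt|lt].
      by rewrite EE (@labinj x y u v exy euv) ?eqxx // lt luv.
    by rewrite Ee; apply/orP; right; apply/existsP; exists x; apply/existsP; exists y;
       rewrite EE eqxx exy lt.
  - case/orP=> [/eqP ->|/andP[-> /existsP[x /existsP[y /andP[/andP[EE exy] lt]]]]].
      by rewrite mem_edges //; apply/existsP; exists u; apply/existsP; exists v;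
         rewrite eqxx euv luv ltnSn.
    by apply/existsP; exists x; apply/existsP; exists y; rewrite EE exy ltnW.
rewrite !inE negb_and; apply/orP; right; apply/negP.
case/existsP=> x /existsP[y /andP[/andP[/eqP EE exy] lt]].
by move: lt; rewrite -(@lab_set u v x y euv exy EE) luv ltnn.
Qed.

Lemma O_none t : (forall x y, e x y -> lab x y != t) -> Oproc t.+1 = Oproc t.
Proof.
move=> H; apply/setP=> E; rewrite !inE; congr (_ && _).
apply/idP/idP.
- case/existsP=> x /existsP[y /andP[/andP[EE exy] lt]].
  apply/existsP; exists x; apply/existsP; exists y; rewrite EE exy /=.
  by rewrite ltn_neqAle -ltnS lt andbT H.
- case/existsP=> x /existsP[y /andP[/andP[EE exy] lt]].
  by apply/existsP; exists x; apply/existsP; exists y; rewrite EE exy ltnW.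
Qed.


Definition hb t v (s : seq V) := if s is y :: _ then lab v y < t else true.

Definition per t v (s : seq V) (B : {set {set V}}) :=
  [/\ uniq (v :: s), path e v s, sorted gtn (pairmap lab v s),
     hb t v s & B \subset induced_edges e [set x in v :: s] :&: Oproc t].

Definition good t (T : V -> seq V) (A : V -> {set {set V}}) :=
 (forall v, per t v (T v) (A v)) /\
 (\sum_v 2 * #|A v| = 2 * #|Oproc t| + \sum_v size (T v))%N.

Lemma sum_upd1 (f g : V -> nat) u : (forall w, w != u -> g w = f w) ->
  (\sum_w g w + f u = \sum_w f w + g u)%N.
Proof.
move=> H; rewrite (bigD1 u) //= [in RHS](bigD1 u) //=.
have -> : (\sum_(w | w != u) g w = \sum_(w | w != u) f w)%N by apply: eq_bigr.
lia.
Qed.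

Lemma sum_upd2 (f g : V -> nat) u v : u != v ->
  (forall w, w != u -> w != v -> g w = f w) ->
  (\sum_w g w + f u + f v = \sum_w f w + g u + g v)%N.
Proof.
move=> nuv H.
pose h w := if w == u then f u else g w.
have e1 : (\sum_w g w + h u = \sum_w h w + g u)%N.
  by apply: sum_upd1 => w /negbTE; rewrite /h => ->.
have hu : h u = f u by rewrite /h eqxx.
have e2 : (\sum_w h w + f v = \sum_w f w + h v)%N.
  apply: sum_upd1 => w wv; rewrite /h; case: ifP => [/eqP -> //|/negbT wu].
  by rewrite H.
have hv : h v = g v by rewrite /h eq_sym (negbTE nuv).
rewrite hu in e1; lia.
Qed.

Lemma induced_sub (S S' : {set V}) E : S \subset S' -> E \in induced_edges e S ->
  E \in induced_edges e S'.
Proof.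
by move=> sS; rewrite !inE => /andP[-> /subset_trans]; apply.
Qed.

Lemma edge_in_induced (S : {set V}) u v : e u v -> u \in S -> v \in S ->
  [set u; v] \in induced_edges e S.
Proof.
move=> euv uS vS; rewrite inE mem_edges //=.
by apply/subsetP=> x; rewrite !inE => /orP[] /eqP ->.
Qed.

Lemma path_gtn t v s : sorted gtn (pairmap lab v s) -> hb t v s ->
  path gtn t (pairmap lab v s).
Proof. by case: s => //= y s -> ->. Qed.

Lemma hbW t v s : hb t v s -> hb t.+1 v s.
Proof. by case: s => //= y _ /leqW. Qed.

Lemma OW t : Oproc t \subset Oproc t.+1.
Proof.
apply/subsetP=> E; rewrite !inE => /andP[-> /existsP[x /existsP[y /andP[/andP[EE exy] lt]]]].
by apply/existsP; exists x; apply/existsP; exists y; rewrite EE exy ltnW.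
Qed.


Lemma bad_step t T A u v : good t T A -> e u v -> lab u v = t ->
  Oproc t.+1 = [set [set u; v]] :|: Oproc t -> [set u; v] \notin Oproc t -> v \in T u ->
  exists T' A', good t.+1 T' A'.
Proof.
move=> [G1 G2] euv luv Ot1 Onot vTu.
have AuO : [set u; v] \notin A u.
  have [_ _ _ _ h5] := G1 u.
  by apply: contra Onot => /(subsetP h5); rewrite inE => /andP[].
exists T, (fun w => if w == u then [set u; v] |: A u else A w); split.
  move=> w; have [h1 h2 h3 h4 h5] := G1 w; split => //; first exact: hbW.
  case: ifP => [/eqP wu|_].
    subst w; rewrite subUset sub1set; apply/andP; split.
      rewrite in_setI Ot1 setU11 andbT edge_in_induced ?inE ?eqxx ?vTu ?orbT //=.
    apply: (subset_trans h5); apply: setIS; exact: OW.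
  apply: (subset_trans h5); apply: setIS; exact: OW.
have H := @sum_upd1 (fun w => 2 * #|A w|)%N
   (fun w => 2 * #|if w == u then [set u; v] |: A u else A w|)%N u
   (fun w wu => ltac:(by rewrite /= (negbTE wu))).
rewrite /= eqxx cardsU1 AuO add1n in H.
rewrite Ot1 cardsU1 Onot add1n.
apply/eqP; rewrite -(eqn_add2r (2 * #|A u|)) H G2; apply/eqP.
set a := #|Oproc t|; set c := #|A u|; lia.
Qed.


Lemma induced_subset (S S' : {set V}) : S \subset S' ->
  induced_edges e S \subset induced_edges e S'.
Proof. by move=> sS; apply/subsetP=> E; apply: induced_sub. Qed.

Lemma per_W t v s B : per t v s B -> per t.+1 v s B.
Proof.
case=> h1 h2 h3 h4 h5; split => //; first exact: hbW.
by apply: (subset_trans h5); apply: setIS; exact: OW.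
Qed.

Lemma ext_ok t w x s B E : per t x s B -> e w x -> lab w x = t ->
  w \notin s -> w != x -> E = [set w; x] -> E \in Oproc t.+1 ->
  per t.+1 w (x :: s) (E |: B).
Proof.
case=> h1 h2 h3 h4 h5 ewx lwx wns nwx EE EO; split.
- by rewrite /= in_cons negb_or nwx wns.
- by rewrite /= ewx.
- by rewrite /= lwx; apply: path_gtn.
- by rewrite /= lwx.
rewrite subUset sub1set; apply/andP; split.
  by rewrite in_setI EO andbT EE edge_in_induced ?inE ?in_cons ?eqxx ?orbT.
apply: (subset_trans h5); apply: setISS; last exact: OW.
by apply: induced_subset; apply/subsetP=> y; rewrite !inE => ->; rewrite orbT.
Qed.

Lemma swap_step t T A u v : good t T A -> e u v -> lab u v = t -> u != v ->
  Oproc t.+1 = [set [set u; v]] :|: Oproc t -> [set u; v] \notin Oproc t ->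
  v \notin T u -> u \notin T v ->
  exists T' A', good t.+1 T' A'.
Proof.
move=> [G1 G2] euv luv nuv Ot1 Onot vTu uTv.
have nA w : [set u; v] \notin A w.
  have [_ _ _ _ h5] := G1 w.
  by apply: contra Onot => /(subsetP h5); rewrite inE => /andP[].
have EO : [set u; v] \in Oproc t.+1 by rewrite Ot1 setU11.
pose T' w := if w == u then v :: T v else if w == v then u :: T u else T w.
pose A' w := if w == u then [set u; v] |: A v else if w == v then [set u; v] |: A u else A w.
exists T', A'; split.
  move=> w; rewrite /T' /A'; case: ifP => [/eqP ->|wu].
    by apply: ext_ok => //; rewrite eq_sym.
  case: ifP => [/eqP ->|wv]; last exact: per_W.
  apply: ext_ok => //.
  all: try by rewrite esym.
  all: try by rewrite labsym.
  all: try by rewrite eq_sym.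
  all: try by apply/setP=> y; rewrite !inE orbC.
have H1 := @sum_upd2 (fun w => 2 * #|A w|)%N (fun w => 2 * #|A' w|)%N u v nuv
   (fun w wu wv => ltac:(by rewrite /A' /= (negbTE wu) (negbTE wv))).
have H2 := @sum_upd2 (fun w => size (T w))%N (fun w => size (T' w))%N u v nuv
   (fun w wu wv => ltac:(by rewrite /T' /= (negbTE wu) (negbTE wv))).
have Au : A' u = [set u; v] |: A v by rewrite /A' eqxx.
have Av : A' v = [set u; v] |: A u by rewrite /A' eq_sym (negbTE nuv) eqxx.
have Tu : T' u = v :: T v by rewrite /T' eqxx.
have Tv : T' v = u :: T u by rewrite /T' eq_sym (negbTE nuv) eqxx.
rewrite /= Au Av Tu Tv !cardsU1 !nA /= in H1 H2.
rewrite Ot1 cardsU1 Onot /=.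
set a := #|Oproc t| in G2 *; set c := #|A u| in G2 H1 *; set c' := #|A v| in G2 H1 *.
set s1 := (\sum_w 2 * #|A' w|)%N in H1 *.
set s2 := (\sum_w 2 * #|A w|)%N in H1 G2.
set s3 := (\sum_w size (T' w))%N in H2 *.
set s4 := (\sum_w size (T w))%N in H2 G2.
lia.
Qed.


Lemma good_step t T A : good t T A -> exists T' A', good t.+1 T' A'.
Proof.
move=> G.
case: (pickP (fun p : V * V => e p.1 p.2 && (lab p.1 p.2 == t))) =>
  [[u v] /andP[/= euv /eqP luv]|none].
  have [Ot1 Onot] := @O_some t u v euv luv.
  have nuv : u != v by apply/eqP => E; move: euv; rewrite E eirr.
  case: (boolP (v \in T u)) => vTu; first exact: (@bad_step t T A u v G euv luv Ot1 Onot vTu).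
  case: (boolP (u \in T v)) => uTv; last exact: (@swap_step t T A u v G euv luv nuv Ot1 Onot vTu uTv).
  have sw : [set v; u] = [set u; v] by apply/setP=> y; rewrite !inE orbC.
  apply: (@bad_step t T A v u G _ _ _ _ uTv).
  - by rewrite esym.
  - by rewrite labsym.
  - by rewrite sw.
  - by rewrite sw.
have Hn : forall x y, e x y -> lab x y != t.
  by move=> x y exy; have := none (x, y); rewrite /= exy /= => ->.
case: G => G1 G2; exists T, A; split; first by move=> w; apply: per_W.
by rewrite (@O_none t Hn).
Qed.

Lemma good_iter t : exists T A, good t T A.
Proof.
elim: t => [|t [T [A G]]]; last exact: good_step G.
have O0 : Oproc 0 = set0.
  apply/setP=> E; rewrite !inE; apply/negbTE; rewrite negb_and; apply/orP; right.
  by apply/negP => /existsP[x /existsP[y /andP[_]]].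
exists (fun _ => [::]), (fun _ => set0); split.
  by move=> v; split => //; rewrite sub0set.
by rewrite O0 cards0 !big1.
Qed.


Lemma induced_cons x s : (#|induced_edges e [set y in x :: s]| <=
  #|induced_edges e [set y in s]| + size s)%N.
Proof.
apply: (@leq_trans #|induced_edges e [set y in s] :|: [set [set x; y] | y in s]|).
  apply/subset_leq_card/subsetP => E; rewrite inE => /andP[Ee ES].
  have [a [b [EE eab]]] := @edgesP E Ee.
  have hin y : y \in E -> y != x -> y \in s.
    by move=> yE yx; move: (subsetP ES y yE); rewrite !inE (negbTE yx).
  have nab : a != b by apply/eqP => ab; move: eab; rewrite ab eirr.
  case: (boolP (x \in E)) => xE.
    rewrite in_setU; apply/orP; right; apply/imsetP.
    have: (x == a) || (x == b) by rewrite -in_set2 -EE.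
    case/orP => /eqP xab.
      exists b; last by rewrite EE xab.
      by apply: hin; [rewrite EE set22 | rewrite xab eq_sym].
    exists a; last by rewrite EE xab; apply/setP=> y; rewrite !inE orbC.
    by apply: hin; [rewrite EE set21 | rewrite xab].
  rewrite in_setU; apply/orP; left; rewrite inE Ee /=.
  apply/subsetP => y yE; rewrite inE; apply: hin => //.
  by apply: contraNneq xE => <-.
rewrite cardsU; apply: leq_trans (leq_subr _ _) _; rewrite leq_add2l.
exact: leq_trans (leq_imset_card _ _) (card_size _).
Qed.

End Walk.

Local Open Scope ring_scope.

Theorem proposition5p1 (R : realFieldType) (V : finType) (e : rel V)
    (lab : V -> V -> nat) (eps : R) :
  simple_graph e -> edge_order e lab -> (0 < #|V|)%N ->
  0 < eps -> eps < 1 ->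
  (forall S : {set V}, #|S|%:R <= eps * avg_degree R e ->
     #|induced_edges e S|%:R <= (2^-1 - eps) * avg_degree R e) ->
  exists p : seq V, monotone_path e lab p /\
    eps * avg_degree R e <= (path_length p)%:R.
Proof.
move=> [esym eirr] [labsym labinj] n0 eps0 eps1 HC.
set d := avg_degree R e in HC *.
pose tmax := (\max_(p : V * V) lab p.1 p.2).+1.
have [T [A [G1 G2]]] := @good_iter V e lab esym eirr labsym labinj tmax.
have Oall : Oproc V e lab tmax = edges e.
  apply/setP=> E; rewrite inE; apply/andb_idr => Ee.
  have [x [y [EE exy]]] := @edgesP V e E Ee.
  apply/existsP; exists x; apply/existsP; exists y; rewrite EE eqxx exy /=.
  by rewrite ltnS (@leq_bigmax _ (fun p : V * V => lab p.1 p.2) (x, y)).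
case: (boolP [exists v, eps * d <= (size (T v))%:R]).
  case/existsP=> v hv; exists (v :: T v); split => //.
  by have [h1 h2 h3 _ _] := G1 v; split => //; right.
move/existsPn => Hn; exfalso.
have sz v : (size (T v))%:R < eps * d by rewrite ltNge Hn.
have [v0 _] : exists v0, v0 \in V by apply/card_gt0P.
have epsd : 0 < eps * d by apply: le_lt_trans (sz v0).
set m := (2^-1 - eps) * d.
have bound v : (#|A v|%:R : R) <= m + (size (T v))%:R.
  have [h1 _ _ _ h5] := G1 v.
  have c1 : (#|A v| <= #|induced_edges e [set y in v :: T v]|)%N.
    by apply: subset_leq_card; apply: subset_trans h5 _; apply: subsetIl.
  have c2 := @induced_cons V e eirr v (T v).
  have c3 : #|induced_edges e [set y in T v]|%:R <= m.
    apply: HC; rewrite cardsE; apply: le_trans (ltW (sz v)).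
    by rewrite ler_nat card_size.
  apply: le_trans (_ : (#|induced_edges e [set y in T v]| + size (T v))%:R <= _).
    by rewrite ler_nat (leq_trans c1 c2).
  by rewrite natrD lerD2r.
have N0 : (0 : R) < #|V|%:R by rewrite ltr0n.
have E2 : ((2 * #|edges e|)%N%:R : R) = d * #|V|%:R.
  by rewrite /d /avg_degree mulfVK // gt_eqF.
have key : (((\sum_v 2 * #|A v|)%N)%:R : R) <= \sum_v (2 * m + 2 * (size (T v))%:R).
  rewrite natr_sum; apply: ler_sum => v _; rewrite natrM.
  have := bound v; lra.
rewrite G2 Oall natrD natr_sum big_split /= -mulr_sumr sumr_const E2 in key.
rewrite -mulr_sumr -[m *+ _]mulr_natr in key.
have sumsz : \sum_v (size (T v))%:R <= \sum_(v : V) eps * d.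
  by apply: ler_sum => v _; apply: ltW.
rewrite sumr_const -mulr_natr in sumsz.
have cV : #|(xpredT : pred V)| = #|V| by [].
rewrite cV in key sumsz.
have P : 0 < eps * d * #|V|%:R by rewrite mulr_gt0.
have Em : 2 * (m * #|V|%:R) = d * #|V|%:R - 2 * (eps * d * #|V|%:R).
  by rewrite /m; field.
rewrite Em in key.
move: key sumsz P.
generalize (d * #|V|%:R) (eps * d * #|V|%:R) (\sum_v (size (T v))%:R : R).
move=> a b c; lra.
Qed.
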